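(* Let $n$ be a positive integer, $\gamma\in\mathbb{F}_{2^n}\setminus\mathbb{F}_2$, and let $f$ be the function on $\mathbb{F}_{2^n}$ defined by $f(1)=\gamma^{-1}$, $f(\gamma)=1$, $f(0)=0$ and $f(x)=x^{-1}$ for $x\notin\{0,1,\gamma\}$. Let $C_n=\{\alpha^3:\alpha\in\mathbb{F}_{2^n}\setminus\mathbb{F}_4\}$. Then \[ \nabla_f=\begin{cases}8,&\text{if } [\,2\mid n \text{ and } \{\gamma^3+\gamma^2,\gamma+1\}\cap C_n\neq\emptyset\,] \text{ or } [\,3\mid n \text{ and } \gamma\in\mathbb{F}_8\setminus\mathbb{F}_2\,],\\ 4,&\text{otherwise.}\end{cases} \] In particular, if $n$ is odd and $3\nmid n$, then $\nabla_f=4$ for all $\gamma\in\mathbb{F}_{2^n}\setminus\mathbb{F}_2$.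
   Context: The function $f$ is the swapped inverse function $Inv\circ(1,\gamma)$ with $Inv(x)=x^{2^n-2}$ and $(1,\gamma)$ the transposition swapping $1$ and $\gamma$. For $a,b\in\mathbb{F}_{2^n}$, $\nabla_f(a,b)$ is the number of $x\in\mathbb{F}_{2^n}$ with $f(x+a+b)+f(x+a)+f(x+b)+f(x)=0$, and $\nabla_f=\max\{\nabla_f(a,b): a,b\in\mathbb{F}_{2^n}\setminus\{0\},\ a\neq b\}$. $\mathbb{F}_4,\mathbb{F}_8$ denote the intersections of $\mathbb{F}_{2^n}$ with the subfields of order $4$ and $8$; so $C_n$ is the set of nonzero cubes in $\mathbb{F}_{2^n}$ other than $1$. *)

(* Defs.v *)
From mathcomp Require Import all_boot all_order all_algebra all_field.
Set Implicit Arguments. Unset Strict Implicit. Unset Printing Implicit Defensive.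
Import GRing.Theory.
Local Open Scope ring_scope.

(* Swapped inverse Inv o (1, gamma): f(1)=gamma^-1, f(gamma)=1, f(0)=0,
   f(x)=x^-1 otherwise (MathComp's 0^-1 = 0). *)
Definition swapped_inv (F : finFieldType) (gamma : F) (x : F) : F :=
  if x == 1 then gamma^-1 else if x == gamma then 1 else x^-1.

Definition nabla_ab (F : finFieldType) (f : F -> F) (a b : F) : nat :=
  #|[set x : F | f (x + a + b) + f (x + a) + f (x + b) + f x == 0]|.

Definition nabla (F : finFieldType) (f : F -> F) : nat :=
  (\max_(a : F | a != 0%R) \max_(b : F | (b != 0%R) && (b != a)) nabla_ab f a b)%N.

(* membership in F ∩ F_2, F ∩ F_4, F ∩ F_8 (the subfields of the algebraic closure) *)
Definition inF2 (F : finFieldType) (x : F) : bool := x ^+ 2 == x.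
Definition inF4 (F : finFieldType) (x : F) : bool := x ^+ 4 == x.
Definition inF8 (F : finFieldType) (x : F) : bool := x ^+ 8 == x.

Definition inCn (F : finFieldType) (c : F) : bool :=
  [exists alpha : F, ~~ inF4 alpha && (alpha ^+ 3 == c)].

(* Main.v *)
Require Import Defs.
From mathcomp Require Import all_boot all_order all_algebra all_field all_fingroup all_solvable.
From mathcomp Require Import ring zify.
Set Implicit Arguments. Unset Strict Implicit. Unset Printing Implicit Defensive.
Import GRing.Theory.
Local Open Scope ring_scope.

Section Char2.
Variable F : finFieldType.
Hypothesis h2 : (2:F) = 0.

Lemma natrF n : (n%:R : F) = (odd n)%:R.
Proof.
elim: n => // n IH. rewrite -addn1 natrD IH oddD /=.
case: (odd n) => /=; last by rewrite add0r.
by rewrite -natrD h2.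
Qed.

Let n3 : (3:F) = 1 := natrF 3.
Let n4 : (4:F) = 0 := natrF 4.
Let n5 : (5:F) = 1 := natrF 5.
Let n6 : (6:F) = 0 := natrF 6.
Let n7 : (7:F) = 1 := natrF 7.
Let n8 : (8:F) = 0 := natrF 8.
Let n9 : (9:F) = 1 := natrF 9.
Let n10 : (10:F) = 0 := natrF 10.
Let n11 : (11:F) = 1 := natrF 11.
Let n12 : (12:F) = 0 := natrF 12.
Let n13 : (13:F) = 1 := natrF 13.
Let n14 : (14:F) = 0 := natrF 14.
Let n15 : (15:F) = 1 := natrF 15.
Let n16 : (16:F) = 0 := natrF 16.
Let n17 : (17:F) = 1 := natrF 17.
Let n18 : (18:F) = 0 := natrF 18.
Let n19 : (19:F) = 1 := natrF 19.
Let n20 : (20:F) = 0 := natrF 20.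
Let n21 : (21:F) = 1 := natrF 21.
Let n22 : (22:F) = 0 := natrF 22.
Let n23 : (23:F) = 1 := natrF 23.
Let n24 : (24:F) = 0 := natrF 24.
Let n25 : (25:F) = 1 := natrF 25.
Let n26 : (26:F) = 0 := natrF 26.
Let n27 : (27:F) = 1 := natrF 27.
Let n28 : (28:F) = 0 := natrF 28.
Let n29 : (29:F) = 1 := natrF 29.
Let n30 : (30:F) = 0 := natrF 30.
Let n31 : (31:F) = 1 := natrF 31.
Let n32 : (32:F) = 0 := natrF 32.
Let n33 : (33:F) = 1 := natrF 33.
Let n34 : (34:F) = 0 := natrF 34.
Let n35 : (35:F) = 1 := natrF 35.
Let n36 : (36:F) = 0 := natrF 36.
Let n37 : (37:F) = 1 := natrF 37.
Let n38 : (38:F) = 0 := natrF 38.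
Let n39 : (39:F) = 1 := natrF 39.
Let n40 : (40:F) = 0 := natrF 40.

Tactic Notation "cring" := ring: h2 n3 n4 n5 n6 n7 n8 n9 n10 n11 n12 n13 n14 n15 n16 n17 n18 n19 n20 n21 n22 n23 n24 n25 n26 n27 n28 n29 n30 n31 n32 n33 n34 n35 n36 n37 n38 n39 n40.
Tactic Notation "cring" constr(a) := ring: h2 n3 n4 n5 n6 n7 n8 n9 n10 n11 n12 n13 n14 n15 n16 n17 n18 n19 n20 n21 n22 n23 n24 n25 n26 n27 n28 n29 n30 n31 n32 n33 n34 n35 n36 n37 n38 n39 n40 a.
Tactic Notation "cring" constr(a) constr(b) := ring: h2 n3 n4 n5 n6 n7 n8 n9 n10 n11 n12 n13 n14 n15 n16 n17 n18 n19 n20 n21 n22 n23 n24 n25 n26 n27 n28 n29 n30 n31 n32 n33 n34 n35 n36 n37 n38 n39 n40 a b.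
Tactic Notation "cring" constr(a) constr(b) constr(c) := ring: h2 n3 n4 n5 n6 n7 n8 n9 n10 n11 n12 n13 n14 n15 n16 n17 n18 n19 n20 n21 n22 n23 n24 n25 n26 n27 n28 n29 n30 n31 n32 n33 n34 n35 n36 n37 n38 n39 n40 a b c.

Lemma addxx (x : F) : x + x = 0.
Proof. cring. Qed.

Lemma oppE (x : F) : - x = x.
Proof. by apply/eqP; rewrite eq_sym -addr_eq0 addxx. Qed.

Lemma addKx (x y : F) : x + y + y = x.
Proof. cring. Qed.

Lemma eq_sh (x y z : F) : (x + y == z) = (x == z + y).
Proof. by apply/eqP/eqP => [<-|->]; rewrite addKx. Qed.

Lemma add_eq0 (x y : F) : (x + y == 0) = (x == y).
Proof. by rewrite eq_sh add0r. Qed.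

Lemma t8 (g : F) : g^+3 = g + 1 -> g^+8 = g.
Proof. move=> hg. cring hg. Qed.

Lemma t9 (g u : F) : g = u + u^+2 -> (g + u) * (g+u+1) = g^+2.
Proof. move=> hg. subst g. cring. Qed.


Lemma eq_sh2 (x y c : F) : (x + y == c) = (x + c == y).
Proof. by rewrite eq_sh [in RHS]eq_sh addrC. Qed.

Lemma addI0 (x y : F) : (x + y == x) = (y == 0).
Proof. by rewrite -{2}[x]addr0 (inj_eq (addrI x)). Qed.

Lemma addI0r (x y : F) : (x + y == y) = (x == 0).
Proof. by rewrite addrC addI0. Qed.

Lemma neq_tr (x y x' y' : F) : x + y = x' + y' -> x' != y' -> x != y.
Proof. move=> E H; apply/negP => /eqP Exy; move: H; by rewrite -add_eq0 -E Exy addxx eqxx. Qed.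

Lemma addII (x y z : F) : (x + y == x + z) = (y == z).
Proof. by rewrite (inj_eq (addrI x)). Qed.

Goal True. Abort.
Lemma sum4 (p q r s : F) : p != 0 -> q != 0 -> r != 0 -> s != 0 ->
  (p^-1 + q^-1 + r^-1 + s^-1) * (p*q*r*s) = q*r*s + p*r*s + p*q*s + p*q*r.
Proof. move=> hp hq hr hs. by field; rewrite ?hp ?hq ?hr ?hs. Qed.

Lemma sum3c (k q r s : F) : q != 0 -> r != 0 -> s != 0 ->
  (q^-1 + r^-1 + s^-1 + k) * (q*r*s) = r*s + q*s + q*r + k*q*r*s.
Proof. move=> hq hr hs. by field; rewrite ?hq ?hr ?hs. Qed.

Variable g : F.
Hypothesis hg0 : g != 0.
Hypothesis hg1 : g != 1.

Let f := swapped_inv g.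

Definition D a b x := f (x + a + b) + f (x + a) + f (x + b) + f x.
Definition inV (a b v : F) := (v == 0) || (v == a) || (v == b) || (v == a + b).

Lemma f0 : f 0 = 0.
Proof. by rewrite /f /swapped_inv eq_sym oner_eq0 eq_sym (negbTE hg0) invr0. Qed.
Lemma f1 : f 1 = g^-1.
Proof. by rewrite /f /swapped_inv eqxx. Qed.
Lemma fg : f g = 1.
Proof. by rewrite /f /swapped_inv (negbTE hg1) eqxx. Qed.
Lemma fE x : x != 1 -> x != g -> f x = x^-1.
Proof. by move=> h1 h2'; rewrite /f /swapped_inv (negbTE h1) (negbTE h2'). Qed.

Lemma DaE a b x : D a b (x + a) = D a b x.
Proof. rewrite /D !addKx. ring. Qed.

Lemma DbE a b x : D a b (x + b) = D a b x.
Proof.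
rewrite /D (_ : x + b + a + b = x + a); last by cring.
rewrite addKx (addrAC x b a). ring.
Qed.

Lemma D_shift a b x v : inV a b v -> D a b (x + v) = D a b x.
Proof.
case/orP => [/orP[/orP[]|]|] /eqP->; first by rewrite addr0.
- by rewrite DaE.
- by rewrite DbE.
- by rewrite addrA DbE DaE.
Qed.

Lemma D_swap a b x : D b a x = D a b x.
Proof. rewrite /D (addrAC x b a). ring. Qed.

Lemma D_ab a b x : D a (a + b) x = D a b x.
Proof.
rewrite /D (_ : x + a + (a + b) = x + b); last by cring.
rewrite (addrA x a b). ring.
Qed.

Lemma inV_swap a b v : inV b a v = inV a b v.
Proof.
rewrite /inV (addrC b a).
by case: (v == 0); case: (v == a); case: (v == b); case: (v == a + b).
Qed.

Lemma inV_ab a b v : inV a (a + b) v = inV a b v.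
Proof.
rewrite /inV (_ : a + (a + b) = b); last by cring.
by case: (v == 0); case: (v == a); case: (v == b); case: (v == a + b).
Qed.

Lemma inVD a b u v : inV a b u -> inV a b v -> inV a b (u + v).
Proof.
have e1 : a + b + a = b by cring.
have e2 : a + b + b = a by cring.
have e3 : a + (a + b) = b by cring.
have e4 : b + (a + b) = a by cring.
have e5 : b + a = a + b by rewrite addrC.
case/orP => [/orP[/orP[]|]|] /eqP->;
case/orP => [/orP[/orP[]|]|] /eqP->;
rewrite /inV ?add0r ?addr0 ?addxx ?e1 ?e2 ?e3 ?e4 ?e5 ?eqxx ?orbT //.
Qed.

Lemma rebase a b w : a != 0 -> b != 0 -> a != b -> w != 0 -> inV a b w ->
  exists u, [/\ u != 0, u != w, (forall x, D a b x = D w u x) &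
               (forall v, inV a b v = inV w u v)].
Proof.
move=> ha hb hab hw.
case/orP => [/orP[/orP[]|]|] /eqP Ew; subst w; first by rewrite eqxx in hw.
- by exists b; split => //; rewrite eq_sym.
- exists a; split => //.
  + by move=> x; rewrite D_swap.
  + by move=> v; rewrite inV_swap.
- exists a; split => //.
  + by rewrite eq_sym addI0.
  + by move=> x; rewrite -D_ab D_swap.
  + by move=> v; rewrite -inV_ab inV_swap.
Qed.


Definition cset (a b c : F) := [:: c; c + a; c + b; c + a + b].

Lemma mem_cset a b c x : inV a b (x + c) -> x \in cset a b c.
Proof.
rewrite /cset /inV !inE.
case/orP => [/orP[/orP[]|]|]; rewrite ?add_eq0 ?eq_sh => /eqP->.
- by rewrite eqxx.
- by rewrite addrC eqxx orbT.
- by rewrite addrC eqxx !orbT.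
- by rewrite (_ : a + b + c = c + a + b) ?eqxx ?orbT //; cring.
Qed.

Lemma cset_inV a b c x : x \in cset a b c -> inV a b (x + c).
Proof.
rewrite /cset !inE /inV.
case/or4P => /eqP->.
- by rewrite addxx eqxx.
- by rewrite (_ : c + a + c = a) ?eqxx ?orbT //; cring.
- by rewrite (_ : c + b + c = b) ?eqxx ?orbT //; cring.
- by rewrite (_ : c + a + b + c = a + b) ?eqxx ?orbT //; cring.
Qed.

Lemma le4 a b c : (forall x, D a b x = 0 -> inV a b (x + c)) ->
  (nabla_ab f a b <= 4)%N.
Proof.
move=> H; rewrite /nabla_ab.
apply: leq_trans (card_size (cset a b c)).
apply: subset_leq_card; apply/subsetP => x; rewrite inE => /eqP Hx.
exact: mem_cset (H x Hx).
Qed.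

Lemma le8 a b c c' : (forall x, D a b x = 0 -> inV a b (x + c) || inV a b (x + c')) ->
  (nabla_ab f a b <= 8)%N.
Proof.
move=> H; rewrite /nabla_ab.
apply: leq_trans (card_size (cset a b c ++ cset a b c')).
apply: subset_leq_card; apply/subsetP => x; rewrite inE => /eqP Hx.
rewrite mem_cat; case/orP: (H x Hx) => /mem_cset ->; by rewrite ?orbT.
Qed.

Lemma uniq_cset a b c : a != 0 -> b != 0 -> a != b -> uniq (cset a b c).
Proof.
move=> ha hb hab.
rewrite /cset /= !inE -!addrA !(inj_eq (addrI c)) !(eq_sym c) !addI0 !negb_or.
rewrite ha hb hab add_eq0 hab /=.
rewrite [a == _]eq_sym addI0 hb [b == _]eq_sym (addrC a b) addI0 ha.
done.
Qed.

Lemma ge4 a b c : a != 0 -> b != 0 -> a != b -> D a b c = 0 ->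
  (4 <= nabla_ab f a b)%N.
Proof.
move=> ha hb hab Hc; rewrite /nabla_ab.
have <- : #|cset a b c| = 4%N by apply/card_uniqP; exact: uniq_cset.
apply: subset_leq_card; apply/subsetP => x /cset_inV Hx.
rewrite inE; apply/eqP; change (D a b x = 0).
have := D_shift c Hx; rewrite (_ : c + (x + c) = x); last by cring.
by move=> ->.
Qed.

Lemma ge8 a b c c' : a != 0 -> b != 0 -> a != b -> D a b c = 0 -> D a b c' = 0 ->
  ~~ inV a b (c + c') -> (8 <= nabla_ab f a b)%N.
Proof.
move=> ha hb hab Hc Hc' Hcc; rewrite /nabla_ab.
have <- : #|cset a b c ++ cset a b c'| = 8%N.
  apply/card_uniqP; rewrite cat_uniq; apply/and3P; split; try exact: uniq_cset.
  apply/hasPn => x /cset_inV H1; apply/negP => /cset_inV H2.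
  move: (inVD H1 H2); rewrite (_ : x + c' + (x + c) = c + c') ?(negbTE Hcc) //; cring.
apply: subset_leq_card; apply/subsetP => x; rewrite mem_cat => /orP[] /cset_inV Hx.
  rewrite inE; apply/eqP; change (D a b x = 0).
  have := D_shift c Hx; rewrite (_ : c + (x + c) = x); last by cring.
  by move=> ->.
rewrite inE; apply/eqP; change (D a b x = 0).
have := D_shift c' Hx; rewrite (_ : c' + (x + c') = x); last by cring.
by move=> ->.
Qed.

Lemma Inz (a b x : F) : a != 0 -> b != 0 -> a != b -> x != 0 -> x + a != 0 -> x + b != 0 ->
  x + a + b != 0 -> (x + a + b)^-1 + (x + a)^-1 + (x + b)^-1 + x^-1 != 0.
Proof.
move=> ha hb hab h1 h2' h3 h4.
apply/eqP => E.
have := sum4 h4 h2' h3 h1; rewrite E mul0r.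
rewrite (_ : _ + _ = a * b * (a + b)); last by cring.
move/esym/eqP; rewrite !mulf_eq0 (negbTE ha) (negbTE hb) add_eq0 (negbTE hab).
done.
Qed.

Lemma cover (a b x : F) : a != 0 -> b != 0 -> a != b -> D a b x = 0 ->
  [|| inV a b x, inV a b (x + 1) | inV a b (x + g)].
Proof.
move=> ha hb hab Hx; case: (boolP [|| _, _ | _]) => // H.
move: H; rewrite /inV !negb_or.
case/and3P => /andP[/andP[/andP[x0 xa] xb] xab] /andP[/andP[/andP[y0 ya] yb] yab]
  /andP[/andP[/andP[z0 za] zb] zab].
move: Hx; rewrite /D.
have nz1 : x + a != 0 by rewrite add_eq0.
have nz2 : x + b != 0 by rewrite add_eq0.
have nz3 : x + a + b != 0 by rewrite -addrA add_eq0.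
have s1 : x + a + b != 1 by rewrite -addrA eq_sh2.
have s2 : x + a + b != g by rewrite -addrA eq_sh2.
have s3 : x + a != 1 by rewrite eq_sh2.
have s4 : x + a != g by rewrite eq_sh2.
have s5 : x + b != 1 by rewrite eq_sh2.
have s6 : x + b != g by rewrite eq_sh2.
have s7 : x != 1 by rewrite -add_eq0.
have s8 : x != g by rewrite -add_eq0.
rewrite (fE s1 s2) (fE s3 s4) (fE s5 s6) (fE s7 s8).
by move=> E0; move: (Inz ha hb hab x0 nz1 nz2 nz3); rewrite E0 eqxx.
Qed.


Lemma sum2c (k q r : F) : q != 0 -> r != 0 ->
  (q^-1 + r^-1 + k) * (q*r) = r + q + k*q*r.
Proof. move=> hq hr. by field; rewrite ?hq ?hr. Qed.

Lemma DcE a b c x : inV a b (x + c) -> D a b x = D a b c.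
Proof.
move=> H; have := D_shift c H; rewrite (_ : c + (x + c) = x) //; cring.
Qed.

Lemma caseA u : u != 0 -> u != 1 + g -> u != 1 -> (1 + g) + u != 1 ->
  D (1 + g) u 1 != 0.
Proof.
move=> u0 uw u1 wu1.
have ug : u != g by apply: contraNneq wu1 => ->; apply/eqP; cring.
rewrite /D (_ : 1 + (1 + g) + u = g + u); last by cring.
rewrite (_ : 1 + (1 + g) = g); last by cring.
have e1 : g + u != 1 by rewrite eq_sh2 addrC eq_sym.
have e2 : g + u != g by rewrite addI0.
have e3 : 1 + u != 1 by rewrite addI0.
have e4 : 1 + u != g by rewrite eq_sh2 eq_sym.
rewrite (fE e1 e2) fg (fE e3 e4) f1.
have q0 : g + u != 0 by rewrite add_eq0 eq_sym.
have r0 : 1 + u != 0 by rewrite add_eq0 eq_sym.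
apply/eqP => E.
have := sum3c 1 q0 r0 hg0.
rewrite (_ : (g + u)^-1 + (1 + u)^-1 + g^-1 + 1 = 0); last by rewrite -E; ring.
rewrite mul0r (_ : _ + _ = u * (1 + g) * ((1 + g) + u)); last by cring.
move/esym/eqP; rewrite !mulf_eq0 (negbTE u0) /= add_eq0 eq_sym (negbTE hg1) /=.
by rewrite add_eq0 eq_sym (negbTE uw).
Qed.

Lemma polyB (g' u : F) : g' = u + u^+2 ->
  (g' + 1) * (g' + u) + (g' + 1 + u) * (g' + u) + (g' + 1 + u) * (g' + 1)
  + 1 * (g' + 1 + u) * (g' + 1) * (g' + u) = g'^+3 + g' + 1.
Proof. move=> ->. cring. Qed.

Lemma caseB u : u != 0 -> u != 1 -> u != g -> 1 + u != g ->
  D 1 u 0 = 0 -> D 1 u g = 0 -> g^+3 + g + 1 = 0.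
Proof.
move=> u0 u1 ug u1g.
rewrite /D !add0r f0 addr0 f1.
have e1 : 1 + u != 1 by rewrite addI0.
rewrite (fE e1 u1g) (fE u1 ug) => E1.
have r0 : 1 + u != 0 by rewrite add_eq0 eq_sym.
have := sum3c 0 r0 hg0 u0.
rewrite (_ : (1 + u)^-1 + g^-1 + u^-1 + 0 = 0); last by rewrite addr0 E1.
rewrite mul0r (_ : _ + _ = u + u^+2 + g); last by cring.
move/esym/eqP; rewrite add_eq0 => /eqP Hg.
have e2 : g + 1 + u != 1 by apply: (neq_tr _ ug); cring.
have e3 : g + 1 + u != g by apply: (neq_tr _ u1); cring.
have e4 : g + 1 != 1 by apply: (neq_tr _ hg0); cring.
have e5 : g + 1 != g by apply: (neq_tr _ (oner_neq0 F)); cring.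
have e6 : g + u != 1 by apply: (neq_tr _ u1g); cring.
have e7 : g + u != g by apply: (neq_tr _ u0); cring.
rewrite (fE e2 e3) (fE e4 e5) (fE e6 e7) fg => E2.
have q0 : g + 1 + u != 0 by apply: (neq_tr _ u1g); cring.
have r1 : g + 1 != 0 by apply: (neq_tr _ hg1); cring.
have s0 : g + u != 0 by apply: (neq_tr _ ug); cring.
have := sum3c 1 q0 r1 s0.
rewrite E2 mul0r (polyB (esym Hg)) => H; by rewrite H.
Qed.

Lemma polyC (g' u : F) : u^+2 = g' + g' * u ->
  (1 + g') * (1 + u) * g' + (1 + g' + u) * (1 + u) * g' + (1 + g' + u) * (1 + g') * g'
  + (1 + g' + u) * (1 + g') * (1 + u) = g'^+3 + g'^+2 + 1.
Proof. move=> hu. cring hu. Qed.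


Lemma caseC u : u != 0 -> u != g -> u != 1 -> g + u != 1 ->
  D g u 0 = 0 -> D g u 1 = 0 -> g^+3 + g^+2 + 1 = 0.
Proof.
move=> u0 ug u1 gu1.
rewrite /D !add0r f0 addr0.
have e1 : g + u != g by apply: (neq_tr _ u0); cring.
rewrite (fE gu1 e1) fg (fE u1 ug) => E1.
have q0 : g + u != 0 by apply: (neq_tr _ ug); cring.
have := sum2c 1 q0 u0.
rewrite (_ : (g + u)^-1 + u^-1 + 1 = 0); last by rewrite -E1; ring.
rewrite mul0r => H0.
have hu : u^+2 = g + g * u.
  have -> : u^+2 = g + g * u + (u + (g + u) + 1 * (g + u) * u) by cring.
  by rewrite -H0 addr0.
have e2 : 1 + g + u != 1 by apply: (neq_tr _ ug); cring.
have e3 : 1 + g + u != g by apply: (neq_tr _ u1); cring.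
have e4 : 1 + g != 1 by apply: (neq_tr _ hg0); cring.
have e5 : 1 + g != g by apply: (neq_tr _ (oner_neq0 F)); cring.
have e6 : 1 + u != 1 by apply: (neq_tr _ u0); cring.
have e7 : 1 + u != g by apply: (neq_tr _ gu1); cring.
rewrite (fE e2 e3) (fE e4 e5) (fE e6 e7) f1 => E2.
have p0 : 1 + g + u != 0 by apply: (neq_tr _ gu1); cring.
have q1 : 1 + g != 0 by apply: (neq_tr _ hg1); cring.
have r0 : 1 + u != 0 by apply: (neq_tr _ u1); cring.
have := sum4 p0 q1 r0 hg0.
by rewrite E2 mul0r (polyC hu) => ->.
Qed.

Lemma notinV a b v : ~~ inV a b v -> [/\ v != 0, v != a, v != b & v != a + b].
Proof. by rewrite /inV !negb_or => /andP[/andP[/andP[-> ->] ->] ->]. Qed.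

Lemma D1E a b : a != 0 -> b != 0 -> a != b -> ~~ inV a b 1 -> ~~ inV a b (1 + g) ->
  [/\ 1 + a + b != 0, 1 + a != 0, 1 + b != 0 &
    D a b 1 = (1 + a + b)^-1 + (1 + a)^-1 + (1 + b)^-1 + g^-1].
Proof.
move=> ha hb hab /notinV[_ i1 i2 i3] /notinV[_ j1 j2 j3].
have e1 : 1 + a + b != 1 by apply: (neq_tr _ hab); cring.
have e2 : 1 + a + b != g by apply: (neq_tr _ j3); cring.
have e3 : 1 + a != 1 by apply: (neq_tr _ ha); cring.
have e4 : 1 + a != g by apply: (neq_tr _ j1); cring.
have e5 : 1 + b != 1 by apply: (neq_tr _ hb); cring.
have e6 : 1 + b != g by apply: (neq_tr _ j2); cring.
split.
- by apply: (neq_tr _ i3); cring.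
- by apply: (neq_tr _ i1); cring.
- by apply: (neq_tr _ i2); cring.
- by rewrite /D (fE e1 e2) (fE e3 e4) (fE e5 e6) f1.
Qed.

Lemma DgE a b : a != 0 -> b != 0 -> a != b -> ~~ inV a b g -> ~~ inV a b (1 + g) ->
  [/\ g + a + b != 0, g + a != 0, g + b != 0 &
    D a b g = (g + a + b)^-1 + (g + a)^-1 + (g + b)^-1 + 1].
Proof.
move=> ha hb hab /notinV[_ i1 i2 i3] /notinV[_ j1 j2 j3].
have e1 : g + a + b != 1 by apply: (neq_tr _ j3); cring.
have e2 : g + a + b != g by apply: (neq_tr _ hab); cring.
have e3 : g + a != 1 by apply: (neq_tr _ j1); cring.
have e4 : g + a != g by apply: (neq_tr _ ha); cring.
have e5 : g + b != 1 by apply: (neq_tr _ j2); cring.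
have e6 : g + b != g by apply: (neq_tr _ hb); cring.
split.
- by apply: (neq_tr _ i3); cring.
- by apply: (neq_tr _ i1); cring.
- by apply: (neq_tr _ i2); cring.
- by rewrite /D (fE e1 e2) (fE e3 e4) (fE e5 e6) fg.
Qed.

Lemma D0E a b : a != 0 -> b != 0 -> a != b -> ~~ inV a b 1 -> ~~ inV a b g ->
  D a b 0 = (a + b)^-1 + a^-1 + b^-1.
Proof.
move=> ha hb hab /notinV[_ i1 i2 i3] /notinV[_ j1 j2 j3].
rewrite /D !add0r f0 addr0.
by rewrite (fE _ _ : f (a + b) = _) ?(fE _ _ : f a = _) ?(fE _ _ : f b = _) // eq_sym.
Qed.

Lemma K1 a b : a != 0 -> b != 0 -> a != b -> ~~ inV a b 1 -> ~~ inV a b (1 + g) ->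
  D a b 1 = 0 -> (1 + g^-1) * ((1 + a + b) * (1 + a) * (1 + b)) = a * b * (a + b).
Proof.
move=> ha hb hab i1 ig.
case: (D1E ha hb hab i1 ig) => p0 q0 r0 -> E.
have := sum4 p0 q0 r0 (oner_neq0 F).
rewrite (_ : (1 + a + b)^-1 + (1 + a)^-1 + (1 + b)^-1 + 1^-1 =
   ((1 + a + b)^-1 + (1 + a)^-1 + (1 + b)^-1 + g^-1) + (1 + g^-1)); last first.
  by rewrite invr1; cring.
rewrite E add0r mulr1 => ->; cring.
Qed.

Lemma Kg a b : a != 0 -> b != 0 -> a != b -> ~~ inV a b g -> ~~ inV a b (1 + g) ->
  D a b g = 0 -> (1 + g^-1) * ((g + a + b) * (g + a) * (g + b) * g) = a * b * (a + b).
Proof.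
move=> ha hb hab i1 ig.
case: (DgE ha hb hab i1 ig) => p0 q0 r0 -> E.
have := sum4 p0 q0 r0 hg0.
rewrite (_ : (g + a + b)^-1 + (g + a)^-1 + (g + b)^-1 + g^-1 =
   ((g + a + b)^-1 + (g + a)^-1 + (g + b)^-1 + 1) + (1 + g^-1)); last by cring.
rewrite E add0r => ->; cring.
Qed.


Lemma c_neq0 (a b : F) : a != 0 -> b != 0 -> a != b -> a * b * (a + b) != 0.
Proof. by move=> ha hb hab; rewrite !mulf_neq0 // add_eq0. Qed.

Lemma caseD12 a b : a != 0 -> b != 0 -> a != b -> ~~ inV a b 1 -> ~~ inV a b g ->
  ~~ inV a b (1 + g) -> D a b 1 = 0 -> D a b g = 0 -> False.
Proof.
move=> ha hb hab i1 ig i1g E1 Eg.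
have H1 := K1 ha hb hab i1 i1g E1.
have Hg := Kg ha hb hab ig i1g Eg.
have c0 := c_neq0 ha hb hab.
have t0 : 1 + g^-1 != 0 by apply: contraNneq c0 => t0; rewrite -H1 t0 mul0r.
have HL : (1 + a + b) * (1 + a) * (1 + b) = (g + a + b) * (g + a) * (g + b) * g.
  by apply: (mulfI t0); rewrite H1 Hg.
have : (1 + g) * ((1 + g) + a) * ((1 + g) + b) * ((1 + g) + (a + b)) = 0.
  rewrite (_ : _ * _ = (1 + a + b) * (1 + a) * (1 + b) + (g + a + b) * (g + a) * (g + b) * g).
    by rewrite HL addxx.
  cring.
move: i1g => /notinV[j0 j1 j2 j3].
by move/eqP; rewrite !mulf_eq0 (negbTE j0) !add_eq0 (negbTE j1) (negbTE j2) (negbTE j3).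
Qed.

Lemma caseD0 a b : a != 0 -> b != 0 -> a != b -> ~~ inV a b 1 -> ~~ inV a b g ->
  D a b 0 = 0 -> a^+2 = a * b + b^+2.
Proof.
move=> ha hb hab i1 ig; rewrite (D0E ha hb hab i1 ig) => E.
have ab0 : a + b != 0 by rewrite add_eq0.
have := sum3c 0 ab0 ha hb; rewrite addr0 E mul0r => H.
have -> : a^+2 = a * b + b^+2 + (a * b + (a + b) * b + (a + b) * a + 0 * (a + b) * a * b) by cring.
by rewrite -H addr0.
Qed.

Lemma ginv_mul : g * (1 + g^-1) = g + 1.
Proof. by rewrite mulrDr mulr1 mulfV. Qed.

Lemma caseD01 a b : a != 0 -> b != 0 -> a != b -> ~~ inV a b 1 -> ~~ inV a b (1 + g) ->
  a^+2 = a * b + b^+2 -> D a b 1 = 0 -> a^+3 = g + 1.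
Proof.
move=> ha hb hab i1 i1g rel E1.
have H1 := K1 ha hb hab i1 i1g E1.
rewrite (_ : (1 + a + b) * (1 + a) * (1 + b) = 1 + a^+3) in H1; last by cring rel.
rewrite (_ : a * b * (a + b) = a^+3) in H1; last by cring rel.
have H2 := congr1 (fun z => g * z) H1; rewrite /= mulrA ginv_mul in H2.
apply/eqP; rewrite -add_eq0; apply/eqP.
have -> : a^+3 + (g + 1) = (g + 1) * (1 + a^+3) + g * a^+3 by cring.
by rewrite H2 addxx.
Qed.

Lemma caseD0g a b : a != 0 -> b != 0 -> a != b -> ~~ inV a b g -> ~~ inV a b (1 + g) ->
  a^+2 = a * b + b^+2 -> D a b g = 0 -> a^+3 = g^+3 + g^+2.
Proof.
move=> ha hb hab ig i1g rel Eg.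
have H1 := Kg ha hb hab ig i1g Eg.
rewrite (_ : (g + a + b) * (g + a) * (g + b) * g = g * (g^+3 + a^+3)) in H1; last by cring rel.
rewrite (_ : a * b * (a + b) = a^+3) in H1; last by cring rel.
rewrite mulrA (mulrC (1 + g^-1)) ginv_mul in H1.
have : g * (g^+3 + g^+2 + a^+3) = 0.
  have -> : g * (g^+3 + g^+2 + a^+3) = (g + 1) * (g^+3 + a^+3) + a^+3 by cring.
  by rewrite H1 addxx.
move/eqP; rewrite mulf_eq0 (negbTE hg0) /= => /eqP H.
apply/eqP; rewrite -add_eq0; apply/eqP.
by rewrite addrC.
Qed.


Definition P8 := ((exists w : F, w^+2 + w + 1 = 0) /\ (inCn (g^+3 + g^+2) || inCn (g + 1)))
  \/ g^+3 + g + 1 = 0 \/ g^+3 + g^+2 + 1 = 0.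

Lemma cover3 a b x : a != 0 -> b != 0 -> a != b -> D a b x = 0 ->
  [\/ inV a b (x + 0) /\ D a b 0 = 0, inV a b (x + 1) /\ D a b 1 = 0 |
      inV a b (x + g) /\ D a b g = 0].
Proof.
move=> ha hb hab Hx; case/or3P: (cover ha hb hab Hx) => H.
- constructor 1; split; first by rewrite addr0.
  by rewrite -(DcE (x := x) (c := 0)) ?addr0.
- by constructor 2; split => //; rewrite -(DcE H).
- by constructor 3; split => //; rewrite -(DcE H).
Qed.

Lemma inV_move (a b x c c' : F) : inV a b (x + c) -> inV a b (c + c') -> inV a b (x + c').
Proof. move=> H1 H2; have := inVD H1 H2; rewrite (_ : x + c + (c + c') = x + c') //; cring. Qed.

Lemma alpha_ok (a c : F) : a != 0 -> a^+3 = c -> c != 1 -> inCn c.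
Proof.
move=> a0 ac c1; apply/existsP; exists a; rewrite /inF4 ac eqxx andbT.
apply: contra c1 => /eqP h4.
have : a * a^+3 = a * 1 by rewrite mulr1 -exprS.
by move/(mulfI a0) => <-; rewrite ac.
Qed.

Lemma omega_of (a b : F) : a != 0 -> a^+2 = a * b + b^+2 -> exists w : F, w^+2 + w + 1 = 0.
Proof.
move=> a0 rel; exists (b / a).
have : a^+2 * ((b / a)^+2 + b / a + 1) = b^+2 + a * b + a^+2 by field.
rewrite (_ : b^+2 + a * b + a^+2 = 0); last by rewrite rel; cring.
by move/eqP; rewrite mulf_eq0 expf_eq0 (negbTE a0) /= => /eqP.
Qed.

Lemma UB8 a b : a != 0 -> b != 0 -> a != b -> (nabla_ab f a b <= 8)%N.
Proof.
move=> ha hb hab.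
have C := cover3 ha hb hab.
case: (eqVneq (D a b 0) 0) => E0; last first.
  apply: (le8 (c := 1) (c' := g)) => x /C [[_ E]|[H _]|[H _]];
    by [move: E0; rewrite E eqxx | rewrite H ?orbT].
case: (eqVneq (D a b 1) 0) => E1; last first.
  apply: (le8 (c := 0) (c' := g)) => x /C [[H _]|[_ E]|[H _]];
    by [move: E1; rewrite E eqxx | rewrite H ?orbT].
case: (eqVneq (D a b g) 0) => Eg; last first.
  apply: (le8 (c := 0) (c' := 1)) => x /C [[H _]|[H _]|[_ E]];
    by [move: Eg; rewrite E eqxx | rewrite H ?orbT].
case: (boolP (inV a b 1)) => i1.
  apply: (le8 (c := 0) (c' := g)) => x /C [[H _]|[H _]|[H _]]; rewrite ?H ?orbT //.
  by rewrite (inV_move H) // addr0.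
case: (boolP (inV a b g)) => ig.
  apply: (le8 (c := 0) (c' := 1)) => x /C [[H _]|[H _]|[H _]]; rewrite ?H ?orbT //.
  by rewrite (inV_move H) // addr0.
case: (boolP (inV a b (1 + g))) => i1g.
  apply: (le8 (c := 0) (c' := 1)) => x /C [[H _]|[H _]|[H _]]; rewrite ?H ?orbT //.
  by rewrite (inV_move (c' := 1) H) ?orbT // addrC.
by case: (caseD12 ha hb hab i1 ig i1g E1 Eg).
Qed.


Lemma Deq a b c c' : inV a b (c + c') -> D a b c = D a b c'.
Proof. exact: DcE. Qed.

Lemma UB4 a b : a != 0 -> b != 0 -> a != b -> P8 \/ (nabla_ab f a b <= 4)%N.
Proof.
move=> ha hb hab; have C := cover3 ha hb hab.
have one0 := oner_neq0 F.
case: (boolP (inV a b 1)) => i1; case: (boolP (inV a b g)) => ig.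
- right; apply: (le4 (c := 0)) => x /C [[H _]|[H _]|[H _]] //.
    by rewrite (inV_move H) // addr0.
  by rewrite (inV_move H) // addr0.
- have [u [u0 uw DE VE]] := rebase ha hb hab one0 i1.
  move: (ig); rewrite VE => /notinV[_ g1 gu g1u].
  case: (eqVneq (D a b 0) 0) => E0.
    case: (eqVneq (D a b g) 0) => Eg.
      left; right; left; apply: (caseB u0 uw); rewrite 1?eq_sym -?DE //.
    right; apply: (le4 (c := 0)) => x /C [[H _]|[H _]|[H E]] //.
      by rewrite (inV_move H) // addr0.
    by move: Eg; rewrite E eqxx.
  right; apply: (le4 (c := g)) => x /C [[H E]|[H E]|[H E]] //.
    by move: E0; rewrite E eqxx.
  by move: E0; rewrite -(Deq (c := 1)) ?addr0 // E eqxx.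
- have [u [u0 uw DE VE]] := rebase ha hb hab hg0 ig.
  move: (i1); rewrite VE => /notinV[_ g1 u1 gu1].
  case: (eqVneq (D a b 0) 0) => E0.
    case: (eqVneq (D a b 1) 0) => E1.
      left; right; right; apply: (caseC u0 uw); rewrite 1?eq_sym -?DE //.
    right; apply: (le4 (c := 0)) => x /C [[H _]|[H E]|[H _]] //.
      by move: E1; rewrite E eqxx.
    by rewrite (inV_move H) // addr0.
  right; apply: (le4 (c := 1)) => x /C [[H E]|[H E]|[H E]] //.
    by move: E0; rewrite E eqxx.
  by move: E0; rewrite -(Deq (c := g)) ?addr0 // E eqxx.
case: (boolP (inV a b (1 + g))) => i1g.
  have w0 : 1 + g != 0 by apply: (neq_tr _ hg1); cring.
  have [u [u0 uw DE VE]] := rebase ha hb hab w0 i1g.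
  move: (i1); rewrite VE => /notinV[_ g1 u1 gu1].
  have E1 : D a b 1 != 0 by rewrite DE; apply: caseA => //; by rewrite eq_sym.
  right; apply: (le4 (c := 0)) => x /C [[H E]|[H E]|[H E]] //.
    by move: E1; rewrite E eqxx.
  by move: E1; rewrite (Deq (c := 1) (c' := g)) ?E ?eqxx // addrC.
case: (eqVneq (D a b 0) 0) => E0.
  have rel := caseD0 ha hb hab i1 ig E0.
  have om := omega_of ha rel.
  case: (eqVneq (D a b 1) 0) => E1.
    left; left; split => //; apply/orP; right.
    apply: (alpha_ok ha (caseD01 ha hb hab i1 i1g rel E1)).
    by apply: (neq_tr _ hg0); cring.
  case: (eqVneq (D a b g) 0) => Eg.
    have H3 := caseD0g ha hb hab ig i1g rel Eg.
    case: (eqVneq (g^+3 + g^+2) 1) => H1.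
      by left; right; right; rewrite H1 addxx.
    by left; left; split => //; rewrite (alpha_ok ha H3 H1).
  right; apply: (le4 (c := 0)) => x /C [[H E]|[H E]|[H E]] //.
    by move: E1; rewrite E eqxx.
  by move: Eg; rewrite E eqxx.
case: (eqVneq (D a b 1) 0) => E1.
  have Eg : D a b g != 0 by apply/eqP => Eg; apply: (caseD12 ha hb hab i1 ig i1g E1 Eg).
  right; apply: (le4 (c := 1)) => x /C [[H E]|[H E]|[H E]] //.
    by move: E0; rewrite E eqxx.
  by move: Eg; rewrite E eqxx.
right; apply: (le4 (c := g)) => x /C [[H E]|[H E]|[H E]] //.
  by move: E0; rewrite E eqxx.
by move: E1; rewrite E eqxx.
Qed.


Variable nn : nat.
Hypothesis cardF : #|F| = (2 ^ nn)%N.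
Lemma pow2_iter (x : F) a q : x ^+ (2 ^ a) = x -> x ^+ (2 ^ (a * q)) = x.
Proof.
move=> h; elim: q => [|q IH]; first by rewrite muln0 expn0 expr1.
by rewrite mulnS expnD exprM h IH.
Qed.

Lemma pow2_red (x : F) a n : x ^+ (2 ^ a) = x -> x ^+ (2 ^ n) = x ^+ (2 ^ (n %% a)).
Proof.
move=> h; rewrite {1}(divn_eq n a) expnD exprM mulnC pow2_iter //.
Qed.


Lemma frob_n (x : F) : x ^+ (2 ^ nn) = x.
Proof. by rewrite -cardF expf_card. Qed.

Lemma omega_even (w : F) : w ^+ 2 + w + 1 = 0 -> (2 %| nn)%N.
Proof.
move=> hw.
have w4 : w ^+ (2 ^ 2) = w.
  have -> : w ^+ (2 ^ 2) = w * (w ^+ 2 + w + 1) * (w + 1) + w by cring.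
  by rewrite hw mulr0 mul0r add0r.
have := frob_n w; rewrite (pow2_red nn w4).
have : (nn %% 2 < 2)%N by rewrite ltn_mod.
case E : (nn %% 2)%N => [|[|k]] // _.
  by move=> _; rewrite /dvdn E.
rewrite expn1 => w2.
by move: hw; rewrite w2 addxx add0r => /eqP; rewrite oner_eq0.
Qed.

Lemma F8_three (x : F) : x ^+ 8 = x -> x ^+ 2 != x -> (3 %| nn)%N.
Proof.
move=> h8 h2x.
have x8 : x ^+ (2 ^ 3) = x by [].
have := frob_n x; rewrite (pow2_red nn x8).
have : (nn %% 3 < 3)%N by rewrite ltn_mod.
case E : (nn %% 3)%N => [|[|[|k]]] // _.
- by move=> _; rewrite /dvdn E.
- by rewrite expn1 => h; rewrite h eqxx in h2x.
- move=> h4; move: h8; rewrite (_ : x ^+ 8 = (x ^+ (2 ^ 2)) ^+ 2); last by rewrite -exprM.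
  by rewrite h4 => h; rewrite h eqxx in h2x.
Qed.

Lemma F8_cases (x : F) : x ^+ 8 = x -> x ^+ 2 != x ->
  x ^+ 3 + x + 1 = 0 \/ x ^+ 3 + x ^+ 2 + 1 = 0.
Proof.
move=> h8 h2x.
have : x * (x + 1) * ((x ^+ 3 + x + 1) * (x ^+ 3 + x ^+ 2 + 1)) = 0.
  have -> : x * (x + 1) * ((x ^+ 3 + x + 1) * (x ^+ 3 + x ^+ 2 + 1)) = x ^+ 8 + x by cring.
  by rewrite h8 addxx.
move/eqP; rewrite !mulf_eq0 => /orP[/orP[]|/orP[]] /eqP H; [| | by left | by right].
- by move: h2x; rewrite H expr0n eqxx.
- have : x = 1 by apply/eqP; rewrite -add_eq0 H.
  by move=> E; move: h2x; rewrite E expr1n eqxx.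
Qed.

Lemma even_omega : (2 %| nn)%N -> exists w : F, w ^+ 2 + w + 1 = 0.
Proof.
move=> h2n.
have h3 : (3 %| #|[set: {unit F}]|)%N.
  rewrite card_finField_unit cardF.
  case/dvdnP: h2n => k ->.
  rewrite mulnC expnM (_ : (2 ^ 2)%N = 4%N) //.
  have h1 : (1 <= 4 ^ k)%N by rewrite expn_gt0.
  rewrite -subn1 -eqn_mod_dvd // -modnXm.
  by rewrite (_ : (4 %% 3)%N = 1%N) // exp1n.
have [x _ ox] := Cauchy (isT : prime 3) h3.
exists (val x).
have x3 : val x ^+ 3 = 1 by rewrite -FinRing.val_unitX -ox expg_order.
have x1 : val x != 1.
  apply/eqP => E; have : x = 1%g by apply: val_inj.
  by move/eqP; rewrite -order_eq1 ox.
have : (val x + 1) * (val x ^+ 2 + val x + 1) = 0.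
  have -> : (val x + 1) * (val x ^+ 2 + val x + 1) = val x ^+ 3 + 1 by cring.
  by rewrite x3 addxx.
by move/eqP; rewrite mulf_eq0 add_eq0 (negbTE x1) => /eqP.
Qed.


Lemma card_image2 (T : finType) (h : T -> T) :
  (forall y, #|[pred u | h u == y]| <= 2)%N -> (#|T| <= 2 * #|[set h u | u : T]|)%N.
Proof.
move=> fib.
have -> : #|T| = (\sum_(u : T) 1)%N by rewrite sum1_card.
rewrite (partition_big h (mem [set h u | u : T])) /=; last first.
  by move=> u _; apply: imset_f.
rewrite mulnC -sum_nat_const leq_sum // => y _.
rewrite (eq_bigl (fun u => h u == y)) ?sum1_card //.
exact: (fib y).
Qed.

Lemma fiber_gen (h : F -> F) : (forall u v, h u = h v -> (v == u) || (v == u + 1)) ->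
  forall y, (#|[pred u | h u == y]| <= 2)%N.
Proof.
move=> H y; case: (pickP [pred u | h u == y]) => [u0 /eqP Hu0|H0]; last by rewrite eq_card0.
apply: leq_trans (card_size [:: u0; u0 + 1]); apply: subset_leq_card.
apply/subsetP => v; rewrite !inE => /eqP Hv.
by apply: H; rewrite Hu0 Hv.
Qed.

Lemma wp_fib (c u v : F) : u^+2 + u + c = v^+2 + v + c -> (v == u) || (v == u + 1).
Proof.
move=> E.
have : (u + v) * (u + v + 1) = 0.
  have -> : (u + v) * (u + v + 1) = (u^+2 + u + c) + (v^+2 + v + c) by cring.
  by rewrite E addxx.
move/eqP; rewrite mulf_eq0 => /orP[] /eqP H.
  by rewrite eq_sym -add_eq0 H eqxx.
by rewrite (_ : v = u + 1) ?eqxx ?orbT //; apply/eqP; rewrite eq_sym -add_eq0 -H; apply/eqP; cring.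
Qed.

Lemma AS_cover : (forall u : F, u^+2 + u + 1 != 0) ->
  forall y : F, exists u : F, u^+2 + u = y \/ u^+2 + u = y + 1.
Proof.
move=> now y.
set A := [set u^+2 + u + 0 | u : F]; set B := [set u^+2 + u + 1 | u : F].
case: (boolP (y \in A)) => [/imsetP[u _ ->]|yA]; first by exists u; left; rewrite addr0.
case: (boolP (y \in B)) => [/imsetP[u _ ->]|yB]; first by exists u; right; rewrite addKx.
exfalso.
have hA : (#|F| <= 2 * #|A|)%N.
  by apply: card_image2; apply: fiber_gen => u v; apply: wp_fib.
have hB : (#|F| <= 2 * #|B|)%N.
  by apply: card_image2; apply: fiber_gen => u v; apply: wp_fib.
have dis : A :&: B = set0.
  apply/setP => z; rewrite !inE; apply/negP => /andP[/imsetP[u _ ->] /imsetP[v _ E]].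
  move: (now (u + v)); rewrite (_ : (u + v)^+2 + (u + v) + 1 = (u^+2 + u + 0) + (v^+2 + v + 1)).
    by rewrite E addxx eqxx.
  cring.
have sub : A :|: B \subset [set~ y].
  apply/subsetP => z; rewrite !inE => /orP[] hz; apply/eqP => Ez; subst z.
    by rewrite hz in yA.
  by rewrite hz in yB.
have := subset_leq_card sub; rewrite cardsC1 -subn1.
have := cardsUI A B; rewrite dis cards0 addn0 => ->.
have : (0 < #|F|)%N by apply/card_gt0P; exists 0.
move=> X Y; move: X Y hA hB; set k := #|F|. lia.
Qed.

Lemma inv_eq (x y : F) : x * y = 1 -> x^-1 = y.
Proof.
move=> E; have x0 : x != 0 by apply: contra_eq_neq E => ->; rewrite mul0r eq_sym oner_neq0.
by rewrite -[y](mulKf x0) E mulr1.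
Qed.

Lemma zero_of_mul (X P : F) : X * P = 0 -> P != 0 -> X = 0.
Proof. by move/eqP; rewrite mulf_eq0 => /orP[/eqP ->|/eqP ->] //; rewrite eqxx. Qed.

Lemma aw_rel (a w c : F) : w^+2 + w + 1 = 0 -> a * w = c -> a^+2 + a * c + c^+2 = 0.
Proof.
move=> hw <-.
have -> : a^+2 + a * (a * w) + (a * w)^+2 = a^+2 * (w^+2 + w + 1) by cring.
by rewrite hw mulr0.
Qed.

Lemma w_props (w : F) : w^+2 + w + 1 = 0 -> [/\ w != 0, w != 1, (1 + w)^+2 + (1 + w) + 1 = 0 & w^+3 = 1].
Proof.
move=> hw; split.
- by apply: contra_eq_neq hw => ->; rewrite expr0n /= !add0r oner_neq0.
- by apply: contra_eq_neq hw => ->; rewrite expr1n addKx oner_neq0.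
- by rewrite (_ : _ + _ = w^+2 + w + 1) //; cring.
- have -> : w^+3 = (w + 1) * (w^+2 + w + 1) + 1 by cring.
  by rewrite hw mulr0 add0r.
Qed.

Lemma D0_val (a b : F) : a != 0 -> b != 0 -> a + b != 0 ->
  a != 1 -> a != g -> b != 1 -> b != g -> a + b != 1 -> a + b != g ->
  a^+2 + a * b + b^+2 = 0 -> D a b 0 = 0.
Proof.
move=> a0 b0 ab0 a1 ag b1 bg ab1 abg rel.
rewrite /D !add0r f0 addr0 (fE ab1 abg) (fE a1 ag) (fE b1 bg).
have := sum3c 0 ab0 a0 b0.
rewrite (_ : _ + _ + 0 * _ * _ * _ = a^+2 + a * b + b^+2); last by cring.
rewrite rel addr0 => /zero_of_mul; apply.
by rewrite !mulf_neq0.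
Qed.

Lemma LB_omega (w : F) : w^+2 + w + 1 = 0 ->
  exists a b, [/\ a != 0, b != 0, a != b & D a b 0 = 0].
Proof.
move=> hw; have [w0 w1 hw' w3] := w_props hw.
case: (eqVneq (g^+2 + g + 1) 0) => Hg.
  have g2 : g^+2 = g + 1.
    have -> : g^+2 = g^+2 + g + 1 + (g + 1) by cring.
    by rewrite Hg add0r.
  exists 1, g; split; rewrite ?oner_neq0 // 1?eq_sym //.
  rewrite /D !add0r f0 addr0 f1 fg.
  have e1 : 1 + g != 1 by apply: (neq_tr _ hg0); cring.
  have e2 : 1 + g != g by apply: (neq_tr _ (oner_neq0 F)); cring.
  rewrite (fE e1 e2) (@inv_eq (1 + g) g) ?(@inv_eq g (1 + g)); try by cring g2.
have a0 : g + 1 != 0 by apply: (neq_tr _ hg1); cring.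
have key : forall c, (g + 1) * w = c \/ (g + 1) * (1 + w) = c -> c != 1 /\ c != g.
  move=> c hc.
  have : (g + 1)^+2 + (g + 1) * c + c^+2 = 0.
    by case: hc; [apply: aw_rel | apply: aw_rel].
  move=> H; split; apply/eqP => Ec; move: H; rewrite Ec.
    rewrite (_ : _ + _ = g^+2 + g + 1); last by cring.
    by move/eqP; rewrite (negbTE Hg).
  rewrite (_ : _ + _ = g^+2 + g + 1); last by cring.
  by move/eqP; rewrite (negbTE Hg).
have [b1 bg] := key ((g + 1) * w) (or_introl erefl).
have [c1 cg] : (g + 1) + (g + 1) * w != 1 /\ (g + 1) + (g + 1) * w != g.
  by apply: key; right; rewrite mulrDr mulr1.
exists (g + 1), ((g + 1) * w); split.
- done.
- by rewrite mulf_neq0.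
- by rewrite -{1}[g + 1]mulr1 (inj_eq (mulfI a0)) eq_sym.
apply: D0_val => //.
- by rewrite mulf_neq0.
- rewrite (_ : g + 1 + (g + 1) * w = (g + 1) * (1 + w)); last by rewrite mulrDr mulr1.
  apply: mulf_neq0 => //; by rewrite add_eq0 eq_sym.
- by apply: (neq_tr _ hg0); cring.
- by apply: (neq_tr _ (oner_neq0 F)); cring.
- exact: (aw_rel hw erefl).
Qed.


Lemma kill (K L R : F) : L = R -> K = L + R -> K = 0.
Proof. by move=> -> ->; rewrite addxx. Qed.

Lemma nz_kill (K X Y : F) : K != 0 -> (X = Y -> K = 0) -> X != Y.
Proof. by move=> hK H; apply/eqP => /H E; rewrite E eqxx in hK. Qed.

Lemma gp1 : g + 1 != 0.
Proof. by apply: (neq_tr _ hg1); cring. Qed.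

Lemma gp1_3 : (g + 1)^+3 != 0.
Proof. by rewrite expf_neq0 // gp1. Qed.

Lemma LB_AS : (forall y : F, exists u : F, u^+2 + u = y \/ u^+2 + u = y + 1) ->
  exists a b c, [/\ a != 0, b != 0, a != b & D a b c = 0].
Proof.
move=> AS; have [u [Hu|Hu]] := AS g^-1.
  have [b hb] : exists b : F, b^+2 = g + g * b.
    exists (g * u).
    have e : (g * u)^+2 + g * (g * u) = g.
      have -> : (g * u)^+2 + g * (g * u) = g^+2 * (u^+2 + u) by cring.
      by rewrite Hu expr2 -mulrA mulfV ?mulr1.
    have -> : (g * u)^+2 = ((g * u)^+2 + g * (g * u)) + g * (g * u) by cring.
    by rewrite e.
  have one0 := oner_neq0 F.
  have b0 : b != 0 by apply: (nz_kill hg0) => E; subst b; apply: (kill hb); cring.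
  have bg : b != g by apply: (nz_kill hg0) => E; subst b; apply: (kill hb); cring.
  have b1 : b != 1 by apply: (nz_kill one0) => E; subst b; apply: (kill hb); cring.
  have gb1 : g + b != 1.
    apply: (nz_kill one0) => E.
    have Eb : b = g + 1 by rewrite -E; cring.
    subst b; apply: (kill hb); cring.
  have gbg : g + b != g by apply: (neq_tr _ b0); cring.
  have gb0 : g + b != 0 by apply: (neq_tr _ bg); cring.
  exists g, b, 0; split => //; first by rewrite eq_sym.
  rewrite /D !add0r f0 addr0 (fE gb1 gbg) fg (fE b1 bg).
  have := sum2c 1 gb0 b0.
  rewrite (_ : b + (g + b) + 1 * (g + b) * b = 0); last by apply: (kill hb); cring.
  move/zero_of_mul => H; rewrite (_ : _ + _ = (g + b)^-1 + b^-1 + 1); last by ring.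
  by apply: H; rewrite mulf_neq0.
have [b hb] : exists b : F, g * b^+2 = g * b + (g^+3 + g^+2 + g + 1).
  exists (g + u).
  have e : g * ((g + u)^+2 + (g + u)) = g^+3 + g^+2 + g + 1.
    have -> : g * ((g + u)^+2 + (g + u)) = g^+3 + g^+2 + g * (u^+2 + u) by cring.
    by rewrite Hu mulrDr mulfV // mulr1; cring.
  by rewrite (_ : g * (g + u)^+2 = g * ((g + u)^+2 + (g + u)) + g * (g + u)); [rewrite e; cring | cring].
have K0 : g^+3 + g^+2 + g + 1 != 0.
  by rewrite (_ : _ + _ = (g + 1)^+3); [exact: gp1_3 | cring].
have b0 : b != 0 by apply: (nz_kill K0) => E; subst b; apply: (kill hb); cring.
have b1 : b != 1 by apply: (nz_kill K0) => E; subst b; apply: (kill hb); cring.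
have bg : b != g by apply: (nz_kill gp1) => E; subst b; apply: (kill hb); cring.
have bg1 : b != g + 1 by apply: (nz_kill gp1) => E; subst b; apply: (kill hb); cring.
have e1 : g + 1 + b != 1 by apply: (neq_tr _ bg); cring.
have e2 : g + 1 + b != g by apply: (neq_tr _ b1); cring.
have e3 : g + 1 != 1 by apply: (neq_tr _ hg0); cring.
have e4 : g + 1 != g by apply: (neq_tr _ (oner_neq0 F)); cring.
have e5 : g + b != 1 by apply: (neq_tr _ bg1); cring.
have e6 : g + b != g by apply: (neq_tr _ b0); cring.
have p0 : g + 1 + b != 0 by apply: (neq_tr _ bg1); cring.
have r0 : g + b != 0 by apply: (neq_tr _ bg); cring.
exists 1, b, g; split; rewrite ?oner_neq0 // 1?eq_sym //.
rewrite /D (fE e1 e2) (fE e3 e4) (fE e5 e6) fg.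
have := sum3c 1 p0 gp1 r0.
rewrite (_ : _ + _ + 1 * _ * _ * _ = 0); last by apply: (kill hb); cring.
move/zero_of_mul; apply; by rewrite !mulf_neq0 // gp1.
Qed.


Definition Good8 := exists a b c c', [/\ a != 0, b != 0, a != b &
  [/\ D a b c = 0, D a b c' = 0 & ~~ inV a b (c + c')]].

Lemma w_rule (w : F) : w^+2 + w + 1 = 0 -> w^+2 = w + 1.
Proof. move=> hw; have -> : w^+2 = w^+2 + w + 1 + (w + 1) by cring. by rewrite hw add0r. Qed.

Lemma cubes_w (a w : F) : w^+2 + w + 1 = 0 ->
  (a * w)^+3 = a^+3 /\ (a + a * w)^+3 = a^+3.
Proof. move=> /w_rule hw; split; cring hw. Qed.

Lemma notinV4 a b v : v != 0 -> v != a -> v != b -> v != a + b -> ~~ inV a b v.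
Proof. by move=> *; rewrite /inV !negb_or; apply/andP; split; [apply/andP; split; [apply/andP; split|]|]. Qed.

Lemma LB_C1 (w a : F) : w^+2 + w + 1 = 0 -> a^+3 = g + 1 -> g^+3 + g + 1 != 0 -> Good8.
Proof.
move=> hw ha3 G1; have [w0 w1 hw' w3] := w_props hw.
have [cb cab] := cubes_w a hw.
have P : forall x, x^+3 = g + 1 ->
    [/\ x != 0, x != 1, x != g & [/\ 1 + x != 0, 1 + x != 1 & 1 + x != g]].
  move=> x hx.
  have x0 : x != 0 by apply: (nz_kill gp1) => E; subst x; rewrite -hx expr0n.
  have x1 : x != 1 by apply: (nz_kill hg0) => E; subst x; apply: (kill hx); cring.
  have xg : x != g by apply: (nz_kill G1) => E; subst x; apply: (kill hx); cring.
  split => //; split.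
  - by apply: (neq_tr _ x1); cring.
  - by apply: (neq_tr _ x0); cring.
  - apply: (nz_kill (mulf_neq0 gp1 (mulf_neq0 hg0 hg0))) => E.
    have Ex : x = 1 + g by rewrite -E; cring.
    subst x; apply: (kill hx); cring.
have [a0 a1 ag [a10 a11 a1g]] := P a ha3.
have [b0 b1 bg [b10 b11 b1g]] := P (a * w) (etrans cb ha3).
have [c0 c1 cg [c10 c11 c1g]] := P (a + a * w) (etrans cab ha3).
have ab : a != a * w by rewrite -{1}[a]mulr1 (inj_eq (mulfI a0)) eq_sym.
exists a, (a * w), 0, 1; split => //; split.
- apply: D0_val => //; exact: (aw_rel hw erefl).
- rewrite /D -[1 + a + a * w]addrA (fE c11 c1g) (fE a11 a1g) (fE b11 b1g) f1.
  have := sum4 c10 a10 b10 hg0.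
  have hw2 := w_rule hw.
  rewrite (_ : _ + _ + _ + _ * _ * _ = 0); last by cring hw2 ha3.
  move/zero_of_mul; apply; by rewrite !mulf_neq0.
- by rewrite add0r; apply: notinV4; rewrite ?oner_neq0 // eq_sym.
Qed.

Lemma LB_C2 (w a : F) : w^+2 + w + 1 = 0 -> a^+3 = g^+3 + g^+2 -> g^+3 + g^+2 + 1 != 0 -> Good8.
Proof.
move=> hw ha3 G2; have [w0 w1 hw' w3] := w_props hw.
have [cb cab] := cubes_w a hw.
have P : forall x, x^+3 = g^+3 + g^+2 ->
    [/\ x != 0, x != 1, x != g & [/\ g + x != 0, g + x != 1 & g + x != g]].
  move=> x hx.
  have x0 : x != 0.
    apply: (nz_kill (mulf_neq0 (mulf_neq0 hg0 hg0) gp1)) => E; subst x.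
    apply: (kill hx); cring.
  have x1 : x != 1 by apply: (nz_kill G2) => E; subst x; apply: (kill hx); cring.
  have xg : x != g by apply: (nz_kill (mulf_neq0 hg0 hg0)) => E; subst x; apply: (kill hx); cring.
  split => //; split.
  - by apply: (neq_tr _ xg); cring.
  - apply: (nz_kill gp1) => E.
    have Ex : x = g + 1 by rewrite -E; cring.
    subst x; apply: (kill hx); cring.
  - by apply: (neq_tr _ x0); cring.
have [a0 a1 ag [a10 a11 a1g]] := P a ha3.
have [b0 b1 bg [b10 b11 b1g]] := P (a * w) (etrans cb ha3).
have [c0 c1 cg [c10 c11 c1g]] := P (a + a * w) (etrans cab ha3).
have ab : a != a * w by rewrite -{1}[a]mulr1 (inj_eq (mulfI a0)) eq_sym.
exists a, (a * w), 0, g; split => //; split.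
- apply: D0_val => //; exact: (aw_rel hw erefl).
- rewrite /D -[g + a + a * w]addrA (fE c11 c1g) (fE a11 a1g) (fE b11 b1g) fg.
  have := sum3c 1 c10 a10 b10.
  have hw2 := w_rule hw.
  rewrite (_ : _ + _ + _ + 1 * _ * _ * _ = 0); last by cring hw2 ha3.
  move/zero_of_mul; apply; by rewrite !mulf_neq0.
- by rewrite add0r; apply: notinV4; rewrite // eq_sym.
Qed.


Lemma sq_nz (x : F) : x != 0 -> x^+2 != 0.
Proof. by move=> h; rewrite expf_neq0. Qed.

Lemma LB_C3a : g^+3 + g + 1 = 0 -> Good8.
Proof.
move=> G1.
have g3 : g^+3 = g + 1 by rewrite -[g^+3]addr0 -G1; cring.
have one0 := oner_neq0 F.
have gg : g * (g + 1) != 0 by rewrite mulf_neq0 // gp1.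
have g2g1 : g^+2 + g + 1 != 0.
  apply/eqP => E; move: (sq_nz gp1); rewrite (_ : (g + 1)^+2 = g^+3 + g + 1 + g * (g^+2 + g + 1)).
    by rewrite G1 E mulr0 addr0 eqxx.
  cring.
set b := g^+2 + 1.
have b0 : b != 0 by apply: (neq_tr _ (sq_nz gp1)); rewrite /b; cring.
have b1 : b != 1 by apply: (neq_tr _ (sq_nz hg0)); rewrite /b; cring.
have bg : b != g by apply: (neq_tr _ g2g1); rewrite /b; cring.
have bg1 : b != g + 1 by apply: (neq_tr _ gg); rewrite /b; cring.
have e1 : 1 + b != 1 by apply: (neq_tr _ b0); cring.
have e2 : 1 + b != g by apply: (neq_tr _ gg); rewrite /b; cring.
have q0 : 1 + b != 0 by apply: (neq_tr _ b1); cring.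
exists 1, b, 0, g; split; rewrite // 1?eq_sym //; split.
- rewrite /D !add0r f0 addr0 (fE e1 e2) f1 (fE b1 bg).
  have := sum3c 0 q0 hg0 b0.
  rewrite (_ : _ + _ + _ + 0 * _ * _ * _ = 0); last by rewrite /b; cring g3.
  move/zero_of_mul => H; rewrite -[LHS]addr0; apply: H; by rewrite !mulf_neq0.
- have f1' : g + 1 + b != 1 by apply: (neq_tr _ bg); cring.
  have f2' : g + 1 + b != g by apply: (neq_tr _ b1); cring.
  have f3' : g + 1 != 1 by apply: (neq_tr _ hg0); cring.
  have f4' : g + 1 != g by apply: (neq_tr _ one0); cring.
  have f5' : g + b != 1 by apply: (neq_tr _ bg1); cring.
  have f6' : g + b != g by apply: (neq_tr _ b0); cring.
  have p0 : g + 1 + b != 0 by apply: (neq_tr _ bg1); cring.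
  have r0 : g + b != 0 by apply: (neq_tr _ bg); cring.
  rewrite /D (fE f1' f2') (fE f3' f4') (fE f5' f6') fg.
  have := sum3c 1 p0 gp1 r0.
  have hb : g = b + b^+2 by rewrite /b; cring g3.
  rewrite (polyB hb) G1.
  move/zero_of_mul; apply; by rewrite !mulf_neq0 // gp1.
- rewrite add0r; apply: notinV4; rewrite // 1?eq_sym //.
Qed.

Lemma LB_C3b : g^+3 + g^+2 + 1 = 0 -> Good8.
Proof.
move=> G2.
have g3 : g^+3 = g^+2 + 1 by rewrite -[g^+3]addr0 -G2; cring.
have one0 := oner_neq0 F.
have gg : g * (g + 1) != 0 by rewrite mulf_neq0 // gp1.
have g2g1 : g^+2 + g + 1 != 0.
  apply/eqP => E; move: gp1; rewrite (_ : g + 1 = g^+3 + g^+2 + 1 + g * (g^+2 + g + 1)).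
    by rewrite G2 E mulr0 addr0 eqxx.
  cring.
set b := g^+2.
have b0 : b != 0 by exact: sq_nz.
have bg : b != g by apply: (neq_tr _ gg); rewrite /b; cring.
have b1 : b != 1 by apply: (neq_tr _ (sq_nz gp1)); rewrite /b; cring.
have gb1 : g + b != 1 by apply: (neq_tr _ g2g1); rewrite /b; cring.
have gbg : g + b != g by apply: (neq_tr _ b0); cring.
have gb0 : g + b != 0 by apply: (neq_tr _ bg); cring.
exists g, b, 0, 1; split; rewrite // 1?eq_sym //; split.
- rewrite /D !add0r f0 addr0 (fE gb1 gbg) fg (fE b1 bg).
  have := sum2c 1 gb0 b0.
  rewrite (_ : _ + _ + 1 * _ * _ = 0); last by rewrite /b; cring g3.
  move/zero_of_mul => H; rewrite (_ : _ + _ = (g + b)^-1 + b^-1 + 1); last by ring.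
  by apply: H; rewrite mulf_neq0.
- have f1' : 1 + g + b != 1 by apply: (neq_tr _ gb0); cring.
  have f2' : 1 + g + b != g by apply: (neq_tr _ b1); cring.
  have f3' : 1 + g != 1 by apply: (neq_tr _ hg0); cring.
  have f4' : 1 + g != g by apply: (neq_tr _ one0); cring.
  have f5' : 1 + b != 1 by apply: (neq_tr _ b0); cring.
  have f6' : 1 + b != g by apply: (neq_tr _ gb1); cring.
  have p0 : 1 + g + b != 0 by apply: (neq_tr _ gb1); cring.
  have q0 : 1 + g != 0 by apply: (neq_tr _ hg1); cring.
  have r0 : 1 + b != 0 by apply: (neq_tr _ b1); cring.
  rewrite /D (fE f1' f2') (fE f3' f4') (fE f5' f6') f1.
  have := sum4 p0 q0 r0 hg0.
  have hu : b^+2 = g + g * b by rewrite /b; cring g3.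
  rewrite (polyC hu) G2.
  move/zero_of_mul; apply; by rewrite !mulf_neq0.
- rewrite add0r; apply: notinV4; rewrite ?oner_neq0 // 1?eq_sym //.
Qed.


Definition cond8 := ((2 %| nn)%N && (inCn (g ^+ 3 + g ^+ 2) || inCn (g + 1)))
  || ((3 %| nn)%N && inF8 g && ~~ inF2 g).

Lemma g8_of1 : g^+3 + g + 1 = 0 -> g^+8 = g.
Proof.
move=> G; have g3 : g^+3 = g + 1 by rewrite -[g^+3]addr0 -G; cring.
cring g3.
Qed.

Lemma g8_of2 : g^+3 + g^+2 + 1 = 0 -> g^+8 = g.
Proof.
move=> G; have g3 : g^+3 = g^+2 + 1 by rewrite -[g^+3]addr0 -G; cring.
cring g3.
Qed.

Lemma P8_cond : ~~ inF2 g -> P8 -> cond8.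
Proof.
move=> hF2; rewrite /cond8 => [[[[w hw] hC]|[G|G]]].
- by rewrite (omega_even hw) hC.
- by rewrite (F8_three (g8_of1 G) hF2) /inF8 (g8_of1 G) eqxx hF2 orbT.
- by rewrite (F8_three (g8_of2 G) hF2) /inF8 (g8_of2 G) eqxx hF2 orbT.
Qed.

Lemma cond_Good8 : cond8 -> Good8.
Proof.
case: (eqVneq (g^+3 + g + 1) 0) => G1; first by move=> _; apply: LB_C3a.
case: (eqVneq (g^+3 + g^+2 + 1) 0) => G2; first by move=> _; apply: LB_C3b.
rewrite /cond8 => /orP[/andP[h2n /orP[]]|/andP[/andP[_ h8] hF2]].
- case/existsP => a /andP[_ /eqP ha3].
  have [w hw] := even_omega h2n.
  exact: (LB_C2 hw ha3 G2).
- case/existsP => a /andP[_ /eqP ha3].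
  have [w hw] := even_omega h2n.
  exact: (LB_C1 hw ha3 G1).
- case: (F8_cases (eqP h8) hF2) => G.
    by rewrite G eqxx in G1.
  by rewrite G eqxx in G2.
Qed.

Lemma nabla_eq N : (forall a b : F, a != 0 -> b != 0 -> a != b -> (nabla_ab f a b <= N)%N) ->
  (exists a b : F, [/\ a != 0, b != 0, a != b & (N <= nabla_ab f a b)%N]) -> nabla f = N.
Proof.
move=> U [a [b [a0 b0 ab L]]].
apply/eqP; rewrite eqn_leq; apply/andP; split.
  apply/bigmax_leqP => x x0; apply/bigmax_leqP => y /andP[y0 yx].
  by apply: U => //; rewrite eq_sym.
apply: leq_trans (leq_bigmax_cond a a0).
apply: leq_trans L _; apply: (leq_bigmax_cond (P := fun y => (y != 0) && (y != a)) b).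
by rewrite b0 eq_sym ab.
Qed.

Lemma main_nabla : ~~ inF2 g -> nabla f = (if cond8 then 8%N else 4%N).
Proof.
move=> hF2; apply: nabla_eq.
  move=> a b a0 b0 ab; case: ifP => C; first exact: UB8.
  case: (UB4 a0 b0 ab) => // /(P8_cond hF2); by rewrite C.
case: ifP => C.
  have [a [b [c [c' [a0 b0 ab [Dc Dc' nV]]]]]] := cond_Good8 C.
  by exists a, b; split => //; apply: (ge8 a0 b0 ab Dc Dc' nV).
case: (boolP [exists w : F, w^+2 + w + 1 == 0]) => [/existsP[w /eqP hw]|nw].
  have [a [b [a0 b0 ab Da]]] := LB_omega hw.
  by exists a, b; split => //; apply: (ge4 a0 b0 ab Da).
have AS : forall y : F, exists u : F, u^+2 + u = y \/ u^+2 + u = y + 1.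
  apply: AS_cover => u; move: nw; rewrite negb_exists => /forallP/(_ u); done.
have [a [b [c [a0 b0 ab Dc]]]] := LB_AS AS.
by exists a, b; split => //; apply: (ge4 a0 b0 ab Dc).
Qed.

End Char2.

Unset Implicit Arguments.

Theorem corollary4p2 (F : finFieldType) (n : nat) :
  (0 < n)%N -> #|F| = (2 ^ n)%N ->
  (forall gamma : F, ~~ inF2 gamma ->
     nabla (swapped_inv gamma) =
       (if ((2 %| n)%N && (inCn (gamma ^+ 3 + gamma ^+ 2) || inCn (gamma + 1)))
           || ((3 %| n)%N && inF8 gamma && ~~ inF2 gamma)
        then 8%N else 4%N))
  /\ (odd n -> ~~ (3 %| n)%N ->
      forall gamma : F, ~~ inF2 gamma -> nabla (swapped_inv gamma) = 4%N).
Proof.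
move=> n0 cardF.
have h2 : (2 : F) = 0 := pcharf0 (card_finPcharP cardF (isT : prime 2)).
have key : forall gamma : F, ~~ inF2 gamma ->
     nabla (swapped_inv gamma) =
       (if ((2 %| n)%N && (inCn (gamma ^+ 3 + gamma ^+ 2) || inCn (gamma + 1)))
           || ((3 %| n)%N && inF8 gamma && ~~ inF2 gamma)
        then 8%N else 4%N).
  move=> g hg.
  have g0 : g != 0 by apply: contra hg => /eqP ->; rewrite /inF2 expr0n.
  have g1 : g != 1 by apply: contra hg => /eqP ->; rewrite /inF2 expr1n.
  exact: (main_nabla h2 g0 g1 cardF hg).
split => // odd_n n3 g hg.
rewrite key //.
have -> : (2 %| n)%N = false by rewrite dvdn2 odd_n.
by rewrite (negbTE n3).
Qed.
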